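(* Let $q$ be a prime power, $n\geq 1$, and $a_0,\ldots,a_n$ positive integers. Fix $i\in\{0,\ldots,n\}$ and consider the morphism $$\pi_i:\mathbb{P}(a_0,\ldots,a_{i-1},1,a_{i+1},\ldots,a_n)\to\mathbb{P}(a_0,\ldots,a_n),\qquad [x_0:\cdots:x_n]\mapsto[x_0:\cdots:x_{i-1}:x_i^{a_i}:x_{i+1}:\cdots:x_n].$$ Let $P=[y_0:\cdots:y_n]\in\mathbb{P}(a_0,\ldots,a_n)(\mathbb{F}_q)$ with $y_i=1$, $y_j\in\mathbb{F}_q$ for all $0\le j\le n$, and $P\neq[0:\cdots:0:1:0:\cdots:0]$ (the point whose only nonzero coordinate is the $i$-th one). Let $\operatorname{Supp}(P)=\{j: y_j\neq 0\}$, and set $$\delta_P=\gcd(a_j\mid j\in\operatorname{Supp}(P)),\qquad \delta_{i,P}=\gcd(a_j\mid j\in\operatorname{Supp}(P),\ j\neq i).$$ Then: (1) $\displaystyle \#\pi_i^{-1}(P)(\mathbb{F}_q)=\frac{\gcd\bigl(a_i,(q-1)\,\delta_{i,P}\bigr)}{\delta_P}.$ (2) If moreover $\gcd(a_i,a_j,q-1)=1$ for every $j\in\{0,\ldots,n\}\setminus\{i\}$, then $\#\pi_i^{-1}(P)(\mathbb{F}_q)=\gcd(a_i,q-1)$.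
   Context: For positive integers $b_0,\ldots,b_n$, the weighted projective space $\mathbb{P}(b_0,\ldots,b_n)$ over $\overline{\mathbb{F}}_q$ is the set of tuples $(x_0,\ldots,x_n)\in\overline{\mathbb{F}}_q^{\,n+1}\setminus\{0\}$ modulo the equivalence $(x_0,\ldots,x_n)\sim(\lambda^{b_0}x_0,\ldots,\lambda^{b_n}x_n)$ for $\lambda\in\overline{\mathbb{F}}_q^*$; the class of $(x_0,\ldots,x_n)$ is written $[x_0:\cdots:x_n]$. Its set of $\mathbb{F}_q$-rational points $\mathbb{P}(b_0,\ldots,b_n)(\mathbb{F}_q)$ consists of the points fixed by the Frobenius map $[x_0:\cdots:x_n]\mapsto[x_0^q:\cdots:x_n^q]$. For $P$ as in the claim, $\pi_i^{-1}(P)(\mathbb{F}_q)$ denotes the set of $\mathbb{F}_q$-rational points $Q$ of the source space with $\pi_i(Q)=P$. *)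

(* Defs.v *)
From HB Require Import structures.
From mathcomp Require Import all_boot all_order all_algebra.
Set Implicit Arguments. Unset Strict Implicit. Unset Printing Implicit Defensive.
Import Order.TTheory GRing.Theory Num.Theory.
Local Open Scope ring_scope.

(* Points of affine (n+1)-space over K, coordinates indexed by 'I_m (m = n+1). *)
Definition vect (K : Type) (m : nat) := 'I_m -> K.

Definition nonzero_vect (K : fieldType) m (x : vect K m) : Prop :=
  exists j, x j != 0.

Definition wequiv (K : fieldType) m (b : 'I_m -> nat) (x y : vect K m) : Prop :=
  exists2 l : K, l != 0 & forall j, y j = l ^+ (b j) * x j.

Definition frob (K : fieldType) m (q : nat) (x : vect K m) : vect K m :=
  fun j => x j ^+ q.

(* [x] is an F_q-rational point of P(b): x nonzero and [x^q] = [x]. *)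
Definition wrational (K : fieldType) m (b : 'I_m -> nat) (q : nat) (x : vect K m) : Prop :=
  nonzero_vect x /\ wequiv b x (frob q x).

Definition wsrc m (a : 'I_m -> nat) (i : 'I_m) : 'I_m -> nat :=
  fun j => if j == i then 1%N else a j.

Definition pi_map (K : fieldType) m (a : 'I_m -> nat) (i : 'I_m) (x : vect K m) : vect K m :=
  fun j => if j == i then x j ^+ a i else x j.

(* The set of classes of S (a set of representatives) modulo the relation R has
   exactly N elements: there are N pairwise non-equivalent elements of S such
   that every element of S is equivalent to one of them. *)
Definition card_classes (T : Type) (R : T -> T -> Prop) (S : T -> Prop) (N : nat) : Prop :=
  exists s : seq T,
    [/\ size s = N,
        (forall k (d : T), (k < N)%N -> S (nth d s k)),
        (forall k l (d : T), (k < N)%N -> (l < N)%N -> k <> l -> ~ R (nth d s k) (nth d s l)) &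
        (forall x, S x -> exists2 k, (k < N)%N & forall d : T, R x (nth d s k))].

Definition fiber_card (K : fieldType) m (a : 'I_m -> nat) (i : 'I_m) (q : nat)
  (y : vect K m) (N : nat) : Prop :=
  card_classes (wequiv (wsrc a i))
    (fun x => wrational (wsrc a i) q x /\ wequiv a y (pi_map a i x)) N.

Definition suppgcd m (a : 'I_m -> nat) (P : pred 'I_m) : nat :=
  \big[gcdn/0%N]_(j | P j) a j.

(* Main.v *)
Require Import Defs.
From HB Require Import structures.
From mathcomp Require Import all_boot all_order all_algebra.
From mathcomp Require Import all_fingroup all_solvable all_field.
From mathcomp Require Import zify.
Import Order.TTheory GRing.Theory Num.Theory.
Local Open Scope ring_scope.
Lemma expr_gcd1 {F : fieldType} (x : F) m n :
  x ^+ m = 1 -> x ^+ n = 1 -> x ^+ gcdn m n = 1.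
Proof.
elim: m {-2}m (leqnn m) n => [|M IH] m Hm n hm hn.
  by move: Hm; rewrite leqn0 => /eqP ->; rewrite gcd0n.
case: (posnP m) => [->|m0]; first by rewrite gcd0n.
rewrite gcdnC -gcdn_modl; apply: IH => //.
  by have := ltn_pmod n m0; lia.
move: hn; rewrite {1}(divn_eq n m) exprD mulnC exprM hm expr1n mul1r.
by [].
Qed.

Lemma frob_eq1 {F : fieldType} {p} (hchar : p \in [pchar F]) (x : F) t :
  x ^+ (p ^ t) = 1 -> x = 1.
Proof.
elim: t x => [|t IH] x; first by rewrite expn0 expr1.
rewrite expnSr exprM => h; apply: IH.
apply: (fmorph_inj (pFrobenius_aut hchar)); rewrite rmorph1; exact: h.
Qed.

Lemma prim_root_exists_K {F : closedFieldType} {n} :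
  (0 < n)%N -> n%:R != 0 :> F -> exists z : F, n.-primitive_root z.
Proof.
pose p : {poly F} := 'X^n - 1; have [r Dp] := closed_field_poly_normal p.
move=> n_gt0 nz; rewrite (monicP _) ?monicXnsubC // scale1r in Dp.
have rn1: all n.-unity_root r by apply/allP=> z; rewrite -root_prod_XsubC -Dp.
have sz_r: (n < (size r).+1)%N.
  by rewrite -(size_prod_XsubC r id) -Dp size_XnsubC.
have [|z] := hasP (has_prim_root n_gt0 rn1 _ sz_r); last by exists z.
by rewrite -separable_prod_XsubC -Dp separable_Xn_sub_1.
Qed.
Local Open Scope nat_scope.
Lemma nt1 (A c E p m t : nat) : 0 < A -> 0 < c -> 0 < E -> prime p ->
  coprime p c -> coprime p m -> gcdn A (c * E) = m * p ^ t ->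
  m %/ gcdn m E = gcdn A (c * E) %/ gcdn A E.
Proof.
move=> A0 c0 E0 pp pc pm hG.
have G0 : 0 < gcdn A (c * E) by rewrite gcdn_gt0 A0.
have m0 : 0 < m by move: G0; rewrite hG muln_gt0 => /andP[].
have DG : gcdn A E %| gcdn A (c * E).
  by rewrite dvdn_gcd dvdn_gcdl /= dvdn_mull // dvdn_gcdr.
have hm : gcdn m E %| m by apply: dvdn_gcdl.
have D0 : 0 < gcdn A E by rewrite gcdn_gt0 A0.
have h0 : 0 < gcdn m E by rewrite gcdn_gt0 m0.
apply: eqn_from_log.
- by rewrite divn_gt0 // dvdn_leq.
- by rewrite divn_gt0 // dvdn_leq.
move=> r; rewrite !logn_div // !logn_gcd ?muln_gt0 ?c0 ?E0 // lognM //.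
have := congr1 (logn r) hG.
have pt0 : 0 < p ^ t by rewrite expn_gt0 prime_gt0.
rewrite (lognM r m0 pt0) lognX (logn_prime r pp).
rewrite logn_gcd ?muln_gt0 ?c0 // lognM //.
case: eqP => [->|_].
  rewrite (logn_coprime pm) (logn_coprime pc); lia.
lia.
Qed.

Lemma nt2 (A c E : nat) : 0 < A -> 0 < c -> 0 < E ->
  gcdn (gcdn A E) c = 1 ->
  gcdn A (c * E) %/ gcdn A E = gcdn A c.
Proof.
move=> A0 c0 E0 h1.
have DG : gcdn A E %| gcdn A (c * E).
  by rewrite dvdn_gcd dvdn_gcdl /= dvdn_mull // dvdn_gcdr.
have D0 : 0 < gcdn A E by rewrite gcdn_gt0 A0.
have G0 : 0 < gcdn A (c * E) by rewrite gcdn_gt0 A0.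
apply: eqn_from_log.
- by rewrite divn_gt0 // dvdn_leq.
- by rewrite gcdn_gt0 A0.
move=> r; have := congr1 (logn r) h1.
rewrite logn1 !logn_div // !logn_gcd ?muln_gt0 ?c0 ?E0 ?gcdn_gt0 ?A0 // lognM //; lia.
Qed.
Local Open Scope ring_scope.

Lemma dvpow {F : fieldType} {z : F} {M M'} : z ^+ M = 1 -> (M %| M')%N -> z ^+ M' = 1.
Proof. by move=> zm /dvdnP[k ->]; rewrite mulnC exprM zm expr1n. Qed.

Theorem mainTheorem1
  (p k : nat) (K : closedFieldType)
  (hp : prime p) (hk : (0 < k)%N) (hchar : p \in [pchar K])
  (halg : forall x : K, exists2 e : nat, (0 < e)%N & x ^+ (p ^ e) = x)
  (n : nat) (hn : (1 <= n)%N) (a : 'I_n.+1 -> nat) (ha : forall j, (0 < a j)%N)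
  (i : 'I_n.+1) (y : 'I_n.+1 -> K)
  (hyi : y i = 1) (hyq : forall j, y j ^+ (p ^ k) = y j)
  (hyP : exists2 j, j != i & y j != 0) :
  let q := (p ^ k)%N in
  let deltaP := suppgcd a (fun j => y j != 0) in
  let deltaiP := suppgcd a (fun j => (y j != 0) && (j != i)) in
  fiber_card a i q y (gcdn (a i) ((q - 1) * deltaiP) %/ deltaP)%N /\
  ((forall j, j != i -> gcdn (gcdn (a i) (a j)) (q - 1) = 1%N) ->
   fiber_card a i q y (gcdn (a i) (q - 1))).
Proof.
move=> q deltaP deltaiP.
set A := a i; set E := deltaiP; set c := (q - 1)%N.
have q1 : (1 < q)%N.
  by rewrite /q -{1}(expn0 p) ltn_exp2l // prime_gt1.
have hq : q = c.+1 by rewrite /c; lia.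
have c0 : (0 < c)%N by lia.
have pc : coprime p c.
  have : coprime c.+1 c by apply: coprimeSn.
  rewrite -hq /q; apply: coprime_dvdl; apply: dvdn_exp => //.
have hyq' : forall j, y j ^+ q = y j by move=> j; apply: hyq.
have hD : deltaP = gcdn A E.
  by rewrite /deltaP /suppgcd (bigD1 i) ?hyi ?oner_neq0.
case: hyP => j0 j0i yj0.
have A0 : (0 < A)%N by apply: ha.
have E0 : (0 < E)%N.
  by rewrite /E /deltaiP /suppgcd (bigD1 j0) /= ?yj0 ?j0i // gcdn_gt0 ha.
have Ediv : forall j, y j != 0 -> j != i -> (E %| a j)%N.
  by move=> j yj ji; rewrite /E /deltaiP /suppgcd (biggcdn_inf j) //= yj ji.
have Epow : forall nu : K, nu ^+ E = 1 -> forall j, j != i -> nu ^+ (a j) * y j = y j.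
  move=> nu nuE j ji; have [->|yj] := eqVneq (y j) 0; first by rewrite mulr0.
  by rewrite (dvpow nuE (Ediv j yj ji)) mul1r.
have powE : forall nu : K, (forall j, y j != 0 -> j != i -> nu ^+ (a j) = 1) ->
    nu ^+ E = 1.
  move=> nu H; rewrite /E /deltaiP /suppgcd.
  elim/big_ind: _ => //; first by move=> u v hu hv; apply: expr_gcd1.
  by move=> j /andP[yj ji]; apply: H.
set g := gcdn A (c * E).
have g0 : (0 < g)%N by rewrite gcdn_gt0 A0.
have [m pm hg] := pfactor_coprime hp g0.
set t := logn p g in hg.
have m0 : (0 < m)%N by move: g0; rewrite hg muln_gt0 => /andP[].
have mg : (m %| g)%N by rewrite hg dvdn_mulr.
have mA : (m %| A)%N by apply: dvdn_trans mg (dvdn_gcdl _ _).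
have mcE : (m %| c * E)%N by apply: dvdn_trans mg (dvdn_gcdr _ _).
have mR : m%:R != 0 :> K.
  by rewrite -(dvdn_pcharf hchar) -prime_coprime.
have [w pw] := prim_root_exists_K m0 mR.
set h := gcdn m E.
set N := (m %/ h)%N.
have h0 : (0 < h)%N by rewrite gcdn_gt0 m0.
have hm : (h %| m)%N by apply: dvdn_gcdl.
have mNh : m = (N * h)%N by rewrite divnK.
have N0 : (0 < N)%N by rewrite divn_gt0 // dvdn_leq.
have wm : w ^+ m = 1 := prim_expr_order pw.
have w0 : w != 0.
  by apply/eqP=> w0; move: wm; rewrite w0 expr0n (gtn_eqF m0) => /eqP; rewrite eq_sym oner_eq0.
pose rep (z : K) : vect K n.+1 := fun j => if j == i then z else y j.
have nz_of : forall z : K, z ^+ m = 1 -> z != 0.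
  move=> z zm; apply/eqP=> z0; move: zm; rewrite z0 expr0n (gtn_eqF m0).
  by move=> /eqP; rewrite eq_sym oner_eq0.
have repS : forall z : K, z ^+ m = 1 ->
    wrational (wsrc a i) q (rep z) /\ wequiv a y (pi_map a i (rep z)).
  move=> z zm; have z0 := nz_of z zm.
  split; [split|].
  - by exists i; rewrite /rep eqxx.
  - exists (z ^+ c); first by rewrite expf_neq0.
    move=> j; rewrite /frob /wsrc /rep; case: eqP => [_|/eqP ji].
      by rewrite expr1 hq exprSr.
    rewrite hyq' Epow //; rewrite -exprM; exact: dvpow zm mcE.
  - exists 1; first by rewrite oner_neq0.
    move=> j; rewrite /pi_map /rep; case: eqP => [->|_]; rewrite expr1n mul1r //.
    by rewrite hyi; apply: dvpow zm mA.
have noeq : forall d, (0 < d < N)%N -> (w ^+ d) ^+ h = 1 -> False.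
  move=> d /andP[d0 dN] e.
  have : (m %| d * h)%N by rewrite (prim_order_dvd pw) exprM e.
  rewrite {1}mNh dvdn_pmul2r // => /dvdn_leq => /(_ d0); by rewrite leqNgt dN.
have nuh : forall nu : K, nu ^+ m = 1 ->
    (forall j, j != i -> y j = nu ^+ a j * y j) -> nu ^+ h = 1.
  move=> nu num H; apply: expr_gcd1 => //; apply: powE => j yj ji.
  by apply: (mulIf yj); rewrite mul1r -H.
have key : fiber_card a i q y N.
  exists (mkseq (fun k => rep (w ^+ k)) N); split.
  - by rewrite size_mkseq.
  - move=> k' dd kN; rewrite nth_mkseq //; apply: repS.
    by rewrite exprAC wm expr1n.
  - move=> k1 k2 dd k1N k2N k12; rewrite !nth_mkseq // => -[nu nu0 H].
    have Hi := H i; rewrite /rep /wsrc eqxx expr1 in Hi.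
    have Hj : forall j, j != i -> y j = nu ^+ a j * y j.
      by move=> j ji; have := H j; rewrite /rep /wsrc (negbTE ji).
    have wk0 : forall l, w ^+ l != 0 by move=> l; rewrite expf_neq0.
    have num : nu ^+ m = 1.
      have := congr1 (fun u => u ^+ m) Hi; rewrite /= exprMn exprAC wm expr1n.
      by rewrite exprAC wm expr1n mulr1 => <-.
    have nh := nuh nu num Hj.
    case: (ltngtP k1 k2) => [lt|lt|eq]; last by apply: k12.
    + apply: (noeq (k2 - k1)%N).
        by rewrite subn_gt0 lt /= (leq_ltn_trans (leq_subr _ _) k2N).
      suff -> : w ^+ (k2 - k1) = nu by [].
      apply: (mulIf (wk0 k1)); by rewrite -exprD subnK ?Hi // ltnW.
    + apply: (noeq (k1 - k2)%N).
        by rewrite subn_gt0 lt /= (leq_ltn_trans (leq_subr _ _) k1N).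
      have e : nu * w ^+ (k1 - k2) = 1.
        apply: (mulIf (wk0 k2)); by rewrite mul1r -mulrA -exprD subnK ?Hi // ltnW.
      have := congr1 (fun u => u ^+ h) e; rewrite /= exprMn nh mul1r expr1n.
      by [].
  - move=> x [[nzx [mu mu0 hmu]] [la la0 hla]].
    have hli : x i ^+ A = la ^+ A.
      by have := hla i; rewrite /pi_map eqxx hyi mulr1.
    have hlj : forall j, j != i -> x j = la ^+ a j * y j.
      by move=> j ji; have := hla j; rewrite /pi_map (negbTE ji).
    have hmi : x i ^+ q = mu * x i.
      by have := hmu i; rewrite /frob /wsrc eqxx expr1.
    have hmj : forall j, j != i -> x j ^+ q = mu ^+ a j * x j.
      by move=> j ji; have := hmu j; rewrite /frob /wsrc (negbTE ji).
    have xi0 : x i != 0.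
      apply/eqP=> x0; move: hli; rewrite x0 expr0n (gtn_eqF A0) => /eqP.
      by rewrite eq_sym expf_eq0 (negbTE la0) andbF.
    set z := x i / la.
    have zA : z ^+ A = 1 by rewrite /z exprMn exprVn hli divff // expf_neq0.
    have xc : x i ^+ c = mu.
      by apply: (mulIf xi0); rewrite -exprSr -hq.
    set sg := mu / la ^+ c.
    have sgj : forall j, y j != 0 -> j != i -> sg ^+ a j = 1.
      move=> j yj ji; have := hmj j ji; rewrite hlj // exprMn hyq' mulrA => e.
      have e2 := mulIf yj e.
      have e3 : (la ^+ a j) ^+ c = mu ^+ a j.
        apply: (mulIf (expf_neq0 (a j) la0)); by rewrite -exprSr -hq.
      by rewrite /sg exprMn exprVn -exprM mulnC exprM e3 divff // expf_neq0.
    have sgE := powE sg sgj.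
    have zc : z ^+ c = sg by rewrite /z exprMn exprVn xc.
    have zcE : z ^+ (c * E) = 1 by rewrite exprM zc.
    have zg : z ^+ g = 1 by apply: expr_gcd1.
    have zm : z ^+ m = 1.
      by apply: (@frob_eq1 K p hchar _ t); rewrite -exprM -hg.
    have [r hr] := prim_rootP pw zm.
    have kN : (r %% N < N)%N by rewrite ltn_pmod.
    exists (r %% N)%N => // d; rewrite nth_mkseq //.
    exists (w ^+ (r %% N) / x i).
      by rewrite mulf_neq0 ?invr_neq0 // expf_neq0.
    move=> j; rewrite /rep /wsrc; case: eqP => [->|/eqP ji].
      by rewrite expr1 divfK.
    rewrite (hlj j ji) mulrA -exprMn.
    set tau := w ^+ (r %% N) / x i * la.
    have etau : tau = (w ^+ (r %/ N * N))^-1.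
      have xz : x i = z * la by rewrite /z divfK.
      rewrite /tau xz invfM -!mulrA mulVf // mulr1 hr.
      rewrite {2}(divn_eq r N) exprD invfM mulrC -mulrA mulVf ?mulr1 // ?expf_neq0 //.
    have th : tau ^+ h = 1.
      by rewrite etau exprVn -exprM -mulnA -mNh mulnC exprM wm expr1n invr1.
    by rewrite Epow // (dvpow th) // dvdn_gcdr.

have eN : (g %/ gcdn A E)%N = N by rewrite /N /h (@nt1 A c E p m t A0 c0 E0 hp pc pm hg).
split; first by rewrite hD eN.
move=> hcop.
have h1 : gcdn (gcdn A E) c = 1%N.
  apply/eqP; rewrite -dvdn1 -(hcop j0 j0i).
  by rewrite dvdn_gcd dvdn_gcdr andbT (dvdn_trans (dvdn_gcdl _ _)) // dvdn_gcd dvdn_gcdl /= (dvdn_trans (dvdn_gcdr _ _)) // Ediv.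
by rewrite -(@nt2 A c E A0 c0 E0 h1) -/g eN.
Qed.
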